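(* Let $t\ge 2$ and let $n$ be an integer with $2^{t-1}-1\le n\le 2^t-3$; put $i=2^t-3-n$ and $j=n-2^{t-1}+1$. Then in $\mathbb{F}_2[w_2,w_3]$: \begin{align*} w_3r_{j-2}q_i+r_{j-1}q_{i+1}&=q_{n-2},\\ r_jq_i+w_3r_{j-1}q_{i-1}&=q_{n-1},\\ r_jq_{i+1}+w_3^2r_{j-2}q_{i-1}&=q_n. \end{align*}
   Context: In $\mathbb{F}_2[w_2,w_3]$: $q_0=1$, $q_m=0$ for $m<0$, $q_m=w_2q_{m-2}+w_3q_{m-3}$ for $m\ge1$; $r_0=1$, $r_m=0$ for $m<0$, $r_{m+1}=w_2r_m+w_3^2r_{m-2}$ for $m\ge0$. *)

(* Defs.v *)
From HB Require Import structures.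
From mathcomp Require Import all_boot all_algebra.
From mathcomp Require Import mpoly.
Set Implicit Arguments. Unset Strict Implicit. Unset Printing Implicit Defensive.
Import GRing.Theory.
Local Open Scope ring_scope.

Notation P := {mpoly 'F_2[2]}.
Definition w2 : P := 'X_(@ord0 1).
Definition w3 : P := 'X_(@ord_max 1).

(* q_m for m >= 0: q_0 = 1, q_m = w2 q_{m-2} + w3 q_{m-3} (m >= 1), with
   q_m = 0 for m < 0.  Hence q_1 = 0, q_2 = w2 q_0. *)
Fixpoint qnat (m : nat) : P :=
  match m with
  | 0 => 1
  | 1 => 0
  | 2 => w2 * 1
  | (k.+1 as k1).+2 => w2 * qnat k1 + w3 * qnat k
  end.

(* r_m for m >= 0: r_0 = 1, r_{m+1} = w2 r_m + w3^2 r_{m-2} (m >= 0), with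
   r_m = 0 for m < 0.  Hence r_1 = w2 r_0, r_2 = w2 r_1. *)
Fixpoint rnat (m : nat) : P :=
  match m with
  | 0 => 1
  | 1 => w2 * 1
  | 2 => w2 * (w2 * 1)
  | (k.+2 as k2).+1 => w2 * rnat k2 + w3 ^+ 2 * rnat k
  end.

Definition q (m : int) : P := match m with Posz k => qnat k | Negz _ => 0 end.
Definition r (m : int) : P := match m with Posz k => rnat k | Negz _ => 0 end.

(* Main.v *)
Require Import Defs.
From HB Require Import structures.
From mathcomp Require Import all_boot all_algebra.
From mathcomp Require Import mpoly.
From mathcomp Require Import ring zify.
Import GRing.Theory.
Local Open Scope ring_scope.

Lemma f2 : (2%:R : 'F_2) = 0.
Proof. by apply/val_inj. Qed.
Lemma two0 : (2%:R : P) = 0.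
Proof.
have -> : (2%:R : P) = (2%:R : 'F_2)%:MP by rewrite rmorph_nat.
by rewrite f2 raddf0.
Qed.

Lemma char2 (x : P) : x + x = 0.
Proof. by rewrite -mulr2n -mulr_natr two0 mulr0. Qed.

Lemma qneg (m : int) : m < 0 -> q m = 0.
Proof. by case: m. Qed.
Lemma rneg (m : int) : m < 0 -> r m = 0.
Proof. by case: m. Qed.

Lemma qrec (m : int) : 1 <= m -> q m = w2 * q (m - 2) + w3 * q (m - 3).
Proof.
case: m => // k Hk.
case: k Hk => [|[|[|k]]] Hk //.
- by rewrite /= !mulr0 ?addr0.
- by rewrite /= !mulr0 ?addr0 ?mulr1.
- have e1 : Posz k.+3 - 2 = Posz k.+1 by lia.
  have e2 : Posz k.+3 - 3 = Posz k by lia.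
  by rewrite e1 e2.
Qed.

Lemma rrec (m : int) : 0 <= m -> r (m + 1) = w2 * r m + w3 ^+ 2 * r (m - 2).
Proof.
case: m => // k _.
case: k => [|[|k]].
- by rewrite /= mulr0 addr0.
- by rewrite /= mulr0 addr0.
- have e1 : Posz k.+2 + 1 = Posz k.+3 by lia.
  have e2 : Posz k.+2 - 2 = Posz k by lia.
  by rewrite e1 e2.
Qed.

Definition S (i j n : int) :=
  [/\ w3 * r (j - 2) * q i + r (j - 1) * q (i + 1) = q (n - 2),
      r j * q i + w3 * r (j - 1) * q (i - 1) = q (n - 1)
    & r j * q (i + 1) + w3 ^+ 2 * r (j - 2) * q (i - 1) = q n].

Lemma alg3 (qi1 qi qim1 qim2 rj1 rj rjm1 rjm2 qn1 qnm1 qnm2 : P) :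
  qi1 = w2*qim1 + w3*qim2 ->
  rj1 = w2*rj + w3^+2*rjm2 ->
  qn1 = w2*qnm1 + w3*qnm2 ->
  w3*rjm2*qi + rjm1*qi1 = qnm2 ->
  rj*qi + w3*rjm1*qim1 = qnm1 ->
  rj1*qi + w3^+2*rjm1*qim2 = qn1.
Proof.
move=> hq1 hr hqn H1 H2.
rewrite hqn -H1 -H2 hr hq1.
apply/eqP; rewrite -subr_eq0; apply/eqP.
transitivity (- (w2*w3*rjm1*qim1) - (w2*w3*rjm1*qim1)); first ring.
exact: char2.
Qed.

Lemma alg2 (qi1 qim1 qim2 rj1 rj rjm2 qn : P) :
  qi1 = w2*qim1 + w3*qim2 ->
  rj1 = w2*rj + w3^+2*rjm2 ->
  rj*qi1 + w3^+2*rjm2*qim1 = qn ->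
  rj1*qim1 + w3*rj*qim2 = qn.
Proof. move=> hq1 hr H3; rewrite -H3 hr hq1; ring. Qed.

Lemma step (i j n : int) : 1 <= i -> 0 <= j -> 0 <= n ->
  S i j n -> S (i - 1) (j + 1) (n + 1).
Proof.
move=> hi hj hn [H1 H2 H3].
have e1 : j + 1 - 2 = j - 1 by lia.
have e2 : j + 1 - 1 = j by lia.
have e3 : i - 1 + 1 = i by lia.
have e4 : n + 1 - 2 = n - 1 by lia.
have e5 : n + 1 - 1 = n by lia.
have e6 : i - 1 - 1 = i - 2 by lia.
rewrite /S e1 e2 e3 e4 e5 e6; split.
- by rewrite addrC.
- eapply alg2; last exact H3.
  + have hh : 1 <= i + 1 by lia.
    rewrite (qrec _ hh).
    have -> : i + 1 - 2 = i - 1 by lia.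
    by have -> : i + 1 - 3 = i - 2 by lia.
  + exact: rrec.
- eapply alg3; [ | | | exact H1 | exact H2].
  + have hh : 1 <= i + 1 by lia.
    rewrite (qrec _ hh).
    have -> : i + 1 - 2 = i - 1 by lia.
    by have -> : i + 1 - 3 = i - 2 by lia.
  + exact: rrec.
  + have hh : 1 <= n + 1 by lia.
    rewrite (qrec _ hh).
    have -> : n + 1 - 2 = n - 1 by lia.
    by have -> : n + 1 - 3 = n - 2 by lia.
Qed.

Lemma allj (N : nat) : q (N%:Z - 1) = 0 ->
  forall j : nat, (j <= N)%N -> S (N%:Z - j%:Z) j%:Z (N%:Z + 1 + j%:Z).
Proof.
move=> H0; elim=> [|j IH] hj.
- have a1 : N%:Z - 0%:Z = N%:Z by lia.
  have a2 : N%:Z + 1 + 0%:Z - 2 = N%:Z - 1 by lia.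
  have a3 : N%:Z + 1 + 0%:Z - 1 = N%:Z by lia.
  have a4 : N%:Z + 1 + 0%:Z = N%:Z + 1 by lia.
  rewrite /S a1 a2 a3 a4 H0.
  rewrite (rneg (0%:Z - 2)) // (rneg (0%:Z - 1)) //.
  rewrite /= !mul1r !mulr0 ?mul0r ?addr0 ?add0r; split => //.
- have := step (N%:Z - j%:Z) (j%:Z) (N%:Z + 1 + j%:Z).
  have e1 : N%:Z - j%:Z - 1 = N%:Z - j.+1%:Z by lia.
  have e2 : j%:Z + 1 = j.+1%:Z by lia.
  have e3 : N%:Z + 1 + j%:Z + 1 = N%:Z + 1 + j.+1%:Z by lia.
  rewrite e1 e2 e3; apply; try lia.
  apply: IH; lia.
Qed.

Lemma qpow (s : nat) : (1 <= s)%N -> q ((2 ^ s)%:Z - 3) = 0.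
Proof.
elim: s => // s IH _.
case: s IH => [|s] IH; first by [].
have hpos : (2 <= 2 ^ s.+1)%N.
  by rewrite expnS; have := expn_gt0 2 s; lia.
set N := (2 ^ s.+1 - 2)%N.
have H0 : q (N%:Z - 1) = 0.
  rewrite -IH //; congr q; rewrite /N; lia.
have [_ _ H3] := @allj N H0 N (leqnn N).
rewrite subrr in H3.
have -> : (2 ^ s.+2)%:Z - 3 = N%:Z + 1 + N%:Z.
  rewrite /N expnS; lia.
by rewrite -H3 (qneg (0 - 1)) // !mulr0 add0r.
Qed.

Theorem mainTheorem15 (t : nat) (n : int) :
  (2 <= t)%N ->
  (2 ^ (t - 1))%:Z - 1 <= n -> n <= (2 ^ t)%:Z - 3 ->
  let i := (2 ^ t)%:Z - 3 - n in
  let j := n - (2 ^ (t - 1))%:Z + 1 in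
  [/\ w3 * r (j - 2) * q i + r (j - 1) * q (i + 1) = q (n - 2),
      r j * q i + w3 * r (j - 1) * q (i - 1) = q (n - 1)
    & r j * q (i + 1) + w3 ^+ 2 * r (j - 2) * q (i - 1) = q n].
Proof.
intros ht hl hu i j; unfold i, j; clear i j.
case: t ht hl hu => [|[|s]] // _ hl hu.
have hs : (s.+2 - 1 = s.+1)%N by lia.
rewrite hs in hl *.
have hpos : (2 <= 2 ^ s.+1)%N.
  by rewrite expnS; have := expn_gt0 2 s; lia.
set N := (2 ^ s.+1 - 2)%N.
have H0 : q (N%:Z - 1) = 0.
  rewrite -(@qpow s.+1) //; congr q; rewrite /N; lia.
have [jn hjn] : exists jn : nat, n - (2 ^ s.+1)%:Z + 1 = jn%:Z.
  exists (absz (n - (2 ^ s.+1)%:Z + 1)); lia.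
have hjN : (jn <= N)%N.
  move: hu; rewrite /N expnS; lia.
have := @allj N H0 jn hjN; rewrite /S hjn.
have -> : (2 ^ s.+2)%:Z - 3 - n = N%:Z - jn%:Z by rewrite /N expnS; lia.
have -> : n = N%:Z + 1 + jn%:Z by rewrite /N; lia.
exact: id.
Qed.
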